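(* Let $r\ge 2$ be an integer and let $f\in\mathcal{P}$ (i.e. $f\in\mathcal{P}_c$ for some constant $c>0$). Then $f$ is nowhere differentiable in $\mathbb{R}$.
   Context: $C_p(\mathbb{R})$ denotes the set of all continuous functions $f:\mathbb{R}\to\mathbb{R}$ that are periodic with period $1$ and satisfy $f(0)=0$. Fix an integer $r\ge 2$. For $f\in C_p(\mathbb{R})$ and $(n,k,y)\in\mathbb{N}_0\times\mathbb{Z}\times(0,1)$ (where $\mathbb{N}_0=\mathbb{N}\cup\{0\}$) define $\delta^+_{n,k}(y;f)=\dfrac{f(\frac{k+1}{r^n})-f(\frac{k+y}{r^n})}{\frac{1-y}{r^n}}$ and $\delta^-_{n,k}(y;f)=\dfrac{f(\frac{k+y}{r^n})-f(\frac{k}{r^n})}{\frac{y}{r^n}}$. For a constant $c>0$, $\mathcal{P}_c$ is the set of $f\in C_p(\mathbb{R})$ such that $\delta^+_{n,k}(y;f)-\delta^-_{n,k}(y;f)\le -c$ for all $(n,k,y)\in\mathbb{N}_0\times\mathbb{Z}\times(0,1)$, and $\mathcal{P}=\bigcup_{c>0}\mathcal{P}_c$ (these depend on $r$). *)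

(* Defs.v *)
From Stdlib Require Import Reals Lra Lia ZArith.
Open Scope R_scope.

Definition Cp (f : R -> R) : Prop :=
  (forall x, continuity_pt f x) /\ (forall x, f (x + 1) = f x) /\ f 0 = 0.

Definition delta_plus (r : nat) (f : R -> R) (n : nat) (k : Z) (y : R) : R :=
  (f ((IZR k + 1) / (INR r ^ n)) - f ((IZR k + y) / (INR r ^ n)))
  / ((1 - y) / (INR r ^ n)).

Definition delta_minus (r : nat) (f : R -> R) (n : nat) (k : Z) (y : R) : R :=
  (f ((IZR k + y) / (INR r ^ n)) - f (IZR k / (INR r ^ n)))
  / (y / (INR r ^ n)).

Definition Pc (r : nat) (c : R) (f : R -> R) : Prop :=
  Cp f /\
  forall (n : nat) (k : Z) (y : R), 0 < y < 1 ->
    delta_plus r f n k y - delta_minus r f n k y <= - c.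

Definition P (r : nat) (f : R -> R) : Prop := exists c, 0 < c /\ Pc r c f.

Definition differentiable_at (f : R -> R) (x : R) : Prop :=
  exists l, derivable_pt_lim f x l.

(* Main.v *)
Require Import Defs.
From Stdlib Require Import Reals Lra Lia ZArith.
Open Scope R_scope.

Lemma pow_ge (r n : nat) : (2 <= r)%nat -> INR n + 1 <= INR r ^ n.
Proof.
  intros Hr. assert (H2 : 2 <= INR r) by (apply (le_INR 2 r) in Hr; simpl in Hr; lra).
  induction n as [|n IH]. simpl. lra.
  rewrite S_INR. simpl pow.
  assert (0 <= INR n) by apply pos_INR. nra.
Qed.

Lemma lin_approx (f : R -> R) x l eps : derivable_pt_lim f x l -> 0 < eps ->
  exists d, 0 < d /\ forall p, Rabs (p - x) < d ->
    Rabs (f p - f x - l * (p - x)) <= eps * Rabs (p - x).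
Proof.
  intros Hd He. destruct (Hd eps He) as [[d Hdp] Hdd]. exists d. split; [exact Hdp|].
  intros p Hp. simpl in Hdd. destruct (Req_dec (p - x) 0) as [E|E].
  - replace p with x by lra. replace (f x - f x - l * (x - x)) with 0 by ring.
    replace (x - x) with 0 by ring. rewrite Rabs_R0. lra.
  - specialize (Hdd (p - x) E Hp). replace (x + (p - x)) with p in Hdd by ring.
    replace (f p - f x - l * (p - x)) with (((f p - f x) / (p - x) - l) * (p - x)) by (field; auto).
    rewrite Rabs_mult. apply Rmult_le_compat_r. apply Rabs_pos. lra.
Qed.

Lemma Rabs_le_between (a b : R) : Rabs a <= b -> - b <= a <= b.
Proof. unfold Rabs; destruct Rcase_abs; lra. Qed.

Lemma Rabs_le (a b : R) : - b <= a <= b -> Rabs a <= b.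
Proof. unfold Rabs; destruct Rcase_abs; lra. Qed.

Theorem theorem2p1 (r : nat) (f : R -> R) :
  (2 <= r)%nat -> P r f -> forall x : R, ~ differentiable_at f x.
Proof.
  intros Hr [c [Hc [_ HP]]] x [l Hl].
  destruct (lin_approx f x l (c/16) Hl) as [d [Hd Hlin]]; [lra|].
  destruct (archimed_cor1 d Hd) as [N [HN HN0]].
  set (R0 := INR r ^ N).
  assert (HR : INR N + 1 <= R0) by (apply pow_ge; auto).
  assert (HNp : 0 < INR N) by (apply lt_0_INR; lia).
  assert (HR0 : 0 < R0) by lra.
  assert (Hh : / R0 < d).
  { apply Rle_lt_trans with (/ INR N); auto. apply Rinv_le_contravar; lra. }
  set (k := (up (x * R0) - 1)%Z).
  destruct (archimed (x * R0)) as [A1 A2].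
  assert (Hk : IZR k <= x * R0 < IZR k + 1).
  { unfold k. rewrite minus_IZR. lra. }
  specialize (HP N k (/2) ltac:(lra)).
  unfold delta_plus, delta_minus in HP. fold R0 in HP.
  set (a := IZR k / R0) in *. set (m := (IZR k + /2) / R0) in *. set (b := (IZR k + 1) / R0) in *.
  assert (Ha : a <= x). { unfold a. apply Rmult_le_reg_r with R0; auto. field_simplify; lra. }
  assert (Hb : x < b). { unfold b. apply Rmult_lt_reg_r with R0; auto. field_simplify; lra. }
  assert (Hm1 : m = a + /2 * / R0) by (unfold m, a; field; lra).
  assert (Hb1 : b = a + / R0) by (unfold b, a; field; lra).
  assert (Hih : 0 < / R0) by (apply Rinv_0_lt_compat; lra).
  assert (Ea : Rabs (a - x) <= / R0) by (rewrite Rabs_left1; lra).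
  assert (Eb : Rabs (b - x) <= / R0) by (rewrite Rabs_right; lra).
  assert (Em : Rabs (m - x) <= / R0) by (unfold Rabs; destruct Rcase_abs; lra).
  pose proof (Hlin a ltac:(lra)) as La.
  pose proof (Hlin b ltac:(lra)) as Lb.
  pose proof (Hlin m ltac:(lra)) as Lm.
  set (ea := f a - f x - l * (a - x)) in *.
  set (eb := f b - f x - l * (b - x)) in *.
  set (em := f m - f x - l * (m - x)) in *.
  assert (Q : (f b - f m) / ((1 - /2) / R0) - (f m - f a) / (/2 / R0)
              = 2 * R0 * (eb - 2 * em + ea)).
  { unfold ea, eb, em. rewrite Hm1, Hb1. field. lra. }
  rewrite Q in HP.
  assert (B : Rabs (eb - 2 * em + ea) <= c/4 * / R0).
  { assert (c/16 * Rabs (a - x) <= c/16 * / R0) by (apply Rmult_le_compat_l; lra).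
    assert (c/16 * Rabs (b - x) <= c/16 * / R0) by (apply Rmult_le_compat_l; lra).
    assert (c/16 * Rabs (m - x) <= c/16 * / R0) by (apply Rmult_le_compat_l; lra).
    apply Rabs_le_between in La. apply Rabs_le_between in Lb. apply Rabs_le_between in Lm.
    apply Rabs_le. lra. }
  apply Rabs_le_between in B.
  assert (2 * R0 * (eb - 2 * em + ea) >= 2 * R0 * (- (c/4 * / R0))) by nra.
  replace (2 * R0 * (- (c/4 * / R0))) with (- (c/2)) in H by (field; lra).
  lra.
Qed.
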